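(* Let $\alpha>0$ and let $m_\alpha(a,b)$ be a polynomial in two variables satisfying $|m_\alpha(a,b)-\max(a,b)|\le 2^{-\alpha}$ for all $a,b\in[0,1]$. For $n\in\mathbb{N}$ define polynomials $M_{\alpha,n}(x_1,\dots,x_n)$ recursively by $M_{\alpha,1}(x_1)=x_1$, $$M_{\alpha,2k}(x_1,\dots,x_{2k})=m_\alpha\big(M_{\alpha,k}(x_1,\dots,x_k),\,M_{\alpha,k}(x_{k+1},\dots,x_{2k})\big),$$ $$M_{\alpha,2k+1}(x_1,\dots,x_{2k+1})=m_\alpha\big(M_{\alpha,k}(x_1,\dots,x_k),\,M_{\alpha,k+1}(x_{k+1},\dots,x_{2k+1})\big)$$ for $k\ge1$. Then for every $n\in\mathbb{N}$, $$|M_{\alpha,n}(x_1,\dots,x_n)-\max(x_1,\dots,x_n)|\le 2^{-\alpha}\lceil\log_2 n\rceil$$ for all $x_1,\dots,x_n\in\big[(\lceil\log_2 n\rceil-1)2^{-\alpha},\,1-(\lceil\log_2 n\rceil-1)2^{-\alpha}\big]$. *)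

(* Defs.v *)
From HB Require Import structures.
From mathcomp Require Import all_boot all_order all_algebra.
From mathcomp Require Import all_classical all_reals all_analysis.
Set Implicit Arguments. Unset Strict Implicit. Unset Printing Implicit Defensive.
Import Order.TTheory GRing.Theory Num.Theory.
Local Open Scope ring_scope.

(* A polynomial in two variables a, b over R, represented as {poly {poly R}}:
   the inner variable is a, the outer one is b. *)
Definition eval2 (R : ringType) (p : {poly {poly R}}) (a b : R) : R :=
  (p.[b%:P]).[a].

(* Recursive construction M_{alpha,n} on a sequence of length n:
   split into the first floor(n/2) and last ceil(n/2) entries. Fuel = size. *)
Fixpoint Mfuel (R : ringType) (m : {poly {poly R}}) (fuel : nat) (s : seq R) : R :=
  match fuel with
  | 0 => head 0 s
  | f.+1 =>
      if (size s <= 1)%N then head 0 s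
      else let k := ((size s)./2)%N in
           eval2 m (Mfuel m f (take k s)) (Mfuel m f (drop k s))
  end.

Definition Mpoly (R : ringType) (m : {poly {poly R}}) (s : seq R) : R :=
  Mfuel m (size s) s.

Definition maxseq (R : realDomainType) (s : seq R) : R :=
  foldr Num.max (head 0 s) s.

(* Main.v *)
Require Import Defs.
From HB Require Import structures.
From mathcomp Require Import all_boot all_order all_algebra.
From mathcomp Require Import all_classical all_reals all_analysis.
From mathcomp Require Import lra zify.
Import Order.TTheory GRing.Theory Num.Theory.
Local Open Scope ring_scope.

Lemma foldr_max_ub (R : realDomainType) (y : R) (s : seq R) x :
  x \in s -> x <= foldr Num.max y s.
Proof.
elim: s => [|z s IH] //=; rewrite in_cons => /orP[/eqP->|/IH h].
  by rewrite le_max lexx.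
by rewrite le_max h orbT.
Qed.
Arguments foldr_max_ub {R}.

Lemma foldr_max_mem (R : realDomainType) (y : R) (s : seq R) :
  foldr Num.max y s \in y :: s.
Proof.
elim: s => [|z s IH] /=; first by rewrite mem_head.
case: (leP z (foldr Num.max y s)) => _.
  move: IH; rewrite !in_cons => /orP[->//|->]; by rewrite !orbT.
by rewrite !in_cons eqxx orbT.
Qed.
Arguments foldr_max_mem {R}.

Lemma maxseq_ub (R : realDomainType) (s : seq R) x : x \in s -> x <= maxseq s.
Proof. exact: foldr_max_ub. Qed.
Arguments maxseq_ub {R}.

Lemma maxseq_mem (R : realDomainType) (s : seq R) : (0 < size s)%N -> maxseq s \in s.
Proof.
case: s => [//|z s] _; have := foldr_max_mem z (z :: s).
by rewrite /maxseq /= in_cons => /orP[/eqP->|]; rewrite ?mem_head.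
Qed.
Arguments maxseq_mem {R}.

Lemma maxseq_cat (R : realDomainType) (s1 s2 : seq R) :
  (0 < size s1)%N -> (0 < size s2)%N ->
  maxseq (s1 ++ s2) = Num.max (maxseq s1) (maxseq s2).
Proof.
move=> h1 h2; apply/eqP; rewrite eq_le; apply/andP; split.
  have : maxseq (s1 ++ s2) \in s1 ++ s2 by apply: maxseq_mem; rewrite size_cat addn_gt0 h1.
  rewrite mem_cat => /orP[/maxseq_ub h|/maxseq_ub h]; rewrite le_max h ?orbT //.
rewrite ge_max; apply/andP; split; apply: maxseq_ub; rewrite mem_cat maxseq_mem ?orbT //.
Qed.
Arguments maxseq_cat {R}.

Lemma max_lip (R : realDomainType) (a b A B d : R) :
  `|a - A| <= d -> `|b - B| <= d -> `|Num.max a b - Num.max A B| <= d.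
Proof.
rewrite !ler_norml => /andP[h1 h2] /andP[h3 h4].
case: (leP a b) => hab; case: (leP A B) => hAB; apply/andP; split; lra.
Qed.

Lemma main_lemma (R : realType) (e : R) (he : 0 <= e) (m : {poly {poly R}})
  (hm : forall a b : R, 0 <= a <= 1 -> 0 <= b <= 1 ->
          `|eval2 m a b - Num.max a b| <= e) :
  forall f (s : seq R) k, (0 < size s)%N -> (size s <= f)%N -> (size s <= 2 ^ k)%N ->
   (forall x, x \in s -> (k%:R - 1) * e <= x <= 1 - (k%:R - 1) * e) ->
   `|Mfuel m f s - maxseq s| <= e * k%:R.
Proof.
elim=> [|f IH] s k hs hf hk hx; first by move: hs hf; case: (size s).
rewrite /=; case: ifP => hs1.
  case: s hs hs1 {hf hk hx} => [//|z [|//]] _ _.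
  by rewrite /maxseq /= maxxx subrr normr0 mulr_ge0.
set h := ((size s)./2)%N.
have hn := odd_double_half (size s).
rewrite -addnn in hn.
move: hs1 => /negbT; rewrite -ltnNge => hs2.
case: k hk hx => [|k] hk hx; first by move: hk; rewrite expn0; lia.
have hk' : (2 ^ k.+1 = 2 * 2 ^ k)%N by rewrite expnS.
have st : size (take h s) = h by rewrite size_take; case: ifP => //; lia.
have sd : size (drop h s) = (size s - h)%N by rewrite size_drop.
have hsub : forall x, x \in take h s \/ x \in drop h s ->
   (k%:R - 1) * e <= x <= 1 - (k%:R - 1) * e.
  move=> x H; have : x \in s.
    by rewrite -(cat_take_drop h s) mem_cat; case: H => ->; rewrite ?orbT.
  move/hx; rewrite -natr1 => /andP[? ?]; apply/andP; split; nra.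
have IH1 := IH (take h s) k.
have IH2 := IH (drop h s) k.
rewrite st in IH1; rewrite sd in IH2.
have := IH1 ltac:(lia) ltac:(lia) ltac:(lia) (fun x H => hsub x (or_introl H)).
have := IH2 ltac:(lia) ltac:(lia) ltac:(lia) (fun x H => hsub x (or_intror H)).
set a := Mfuel m f (take h s); set b := Mfuel m f (drop h s).
move=> hb ha.
have bnd : forall t, t != [::] -> (forall x, x \in t -> x \in s) ->
    (k%:R) * e <= maxseq t <= 1 - k%:R * e.
  move=> t tn ts; have /ts/hx : maxseq t \in t.
    by apply: maxseq_mem; move: tn; rewrite -size_eq0; case: (size t).
  by rewrite -natr1 addrK.
have hA := bnd (take h s) ltac:(rewrite -size_eq0 st; apply/eqP; lia)
  (fun x H => mem_take H).
have hB := bnd (drop h s) ltac:(rewrite -size_eq0 sd; apply/eqP; lia)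
  (fun x H => mem_drop H).
have -> : maxseq s = maxseq (take h s ++ drop h s) by rewrite cat_take_drop.
rewrite maxseq_cat; last (by rewrite sd; lia); last by rewrite st; lia.
have hmab := hm a b.
move: ha hb hA hB hmab; rewrite !ler_norml.
set A := maxseq (take h s); set B := maxseq (drop h s).
move=> /andP[ha1 ha2] /andP[hb1 hb2] /andP[hA1 hA2] /andP[hB1 hB2] hmab.
have := hmab ltac:(apply/andP; split; lra) ltac:(apply/andP; split; lra).
have := @max_lip R a b A B (e * k%:R).
rewrite !ler_norml ha1 ha2 hb1 hb2 => /(_ isT isT) /andP[h1 h2] /andP[h3 h4].
rewrite -natr1; apply/andP; split; lra.
Qed.

Theorem theorem2 (R : realType) (alpha : R) (halpha : 0 < alpha)
  (m : {poly {poly R}})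
  (hm : forall a b : R, 0 <= a <= 1 -> 0 <= b <= 1 ->
          `|eval2 m a b - Num.max a b| <= 2 `^ (- alpha))
  (n : nat) (hn : (0 < n)%N) (x : 'I_n -> R)
  (hx : forall i : 'I_n,
          ((up_log 2 n)%:R - 1) * 2 `^ (- alpha) <= x i <=
          1 - ((up_log 2 n)%:R - 1) * 2 `^ (- alpha)) :
  `|Mpoly m [seq x i | i <- enum 'I_n] - maxseq [seq x i | i <- enum 'I_n]|
    <= 2 `^ (- alpha) * (up_log 2 n)%:R.
Proof.
have sz : size [seq x i | i <- enum 'I_n] = n by rewrite size_map size_enum_ord.
rewrite /Mpoly.
have he : 0 <= 2 `^ (- alpha) :> R by apply: powR_ge0.
set S := [seq x i | i <- enum 'I_n].
have h1 : (0 < size S)%N by rewrite sz.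
have h2 : (size S <= size S)%N by [].
have h3 : (size S <= 2 ^ up_log 2 n)%N by rewrite sz; apply: up_logP.
have h4 : forall y, y \in S -> ((up_log 2 n)%:R - 1) * 2 `^ (- alpha) <= y <=
          1 - ((up_log 2 n)%:R - 1) * 2 `^ (- alpha).
  by move=> y /mapP[i _ ->].
exact: (@main_lemma R (2 `^ (- alpha)) he m hm (size S) S (up_log 2 n) h1 h2 h3 h4).
Qed.
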